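(* Let $\psi$ be a saturation with saturation level $\alpha>0$, let $u:[0,L]\to\mathbb{R}$ be a given velocity, and consider the explicit finite-volume scheme for $\partial_t\rho+\partial_x(\rho\psi(\rho)u(x))=0$ on $(0,L)$ described in the context. Fix $n$ and suppose $0\le\rho_i^n\le\alpha$ for all $i$. Then the updated values satisfy $0\le\rho_i^{n+1}\le\alpha$ for all $i$, provided $$\Delta t\le \Gamma\,\frac{\Delta x}{2\max_i|u_{i+1/2}|},\qquad \Gamma=\min\Big\{\frac{1}{\psi(0)},\gamma\Big\},\qquad \gamma=\inf_{s\in(0,\alpha)}\frac{\alpha-s}{\alpha\psi(s)}.$$
   Context: A saturation is a continuous function $\psi:[0,\infty)\to\mathbb{R}$ that is non-increasing and for which there is $\alpha>0$ (the saturation level) with $\psi(\alpha)=0$ and $(\alpha-s)\psi(s)>0$ for $s\neq\alpha$. Discretisation: $\Delta x=L/M$, cells $C_i=(x_{i-1/2},x_{i+1/2})$ with centres $x_i=\Delta x(i-1/2)$, $i=1,\dots,M$; time steps $t^n=n\Delta t$; $\rho_i^n$ is the value on cell $C_i$ at time $t^n$. The scheme is $$\frac{\rho_i^{n+1}-\rho_i^n}{\Delta t}+\frac{F_{i+1/2}^n-F_{i-1/2}^n}{\Delta x}=0,\qquad F_{i+1/2}^n=\rho_i^E\psi_{i+1}^W u_{i+1/2}^++\rho_{i+1}^W\psi_i^E u_{i+1/2}^-,$$ with no-flux boundary conditions $F_{1/2}^n=F_{M+1/2}^n=0$, where $u_{i+1/2}=u(x_{i+1/2})$, $a^+=\max\{a,0\}$,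 $a^-=\min\{a,0\}$, $\rho_i^E=\rho_i^n+\frac{\Delta x}{2}(\rho_x)_i^n$, $\rho_i^W=\rho_i^n-\frac{\Delta x}{2}(\rho_x)_i^n$, $\psi_i^E=\psi(\rho_i^E)$, $\psi_i^W=\psi(\rho_i^W)$, and $$(\rho_x)_i^n=\mathrm{minmod}\Big(\theta\frac{\rho_{i+1}^n-\rho_i^n}{\Delta x},\frac{\rho_{i+1}^n-\rho_{i-1}^n}{2\Delta x},\theta\frac{\rho_i^n-\rho_{i-1}^n}{\Delta x}\Big),\quad \theta=2,$$ where $\mathrm{minmod}(a,b,c)=\min(a,b,c)$ if $a,b,c>0$, $\max(a,b,c)$ if $a,b,c<0$, and $0$ otherwise. The hypothesis ''$0\le\rho_i^n\le\alpha$ for all $i$'' applies to all values entering the slope computations. *)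

(* Defs.v *)
From Stdlib Require Import Reals Lra List.
Import ListNotations.
Open Scope R_scope.

Definition continuous_on_nonneg (f : R -> R) : Prop :=
  forall x, 0 <= x -> forall eps, 0 < eps ->
    exists delta, 0 < delta /\
      forall y, 0 <= y -> Rabs (y - x) < delta -> Rabs (f y - f x) < eps.

Definition is_saturation (psi : R -> R) (alpha : R) : Prop :=
  continuous_on_nonneg psi /\
  (forall x y, 0 <= x -> x <= y -> psi y <= psi x) /\
  0 < alpha /\ psi alpha = 0 /\
  (forall s, 0 <= s -> s <> alpha -> (alpha - s) * psi s > 0).

Definition is_inf (E : R -> Prop) (g : R) : Prop :=
  (forall x, E x -> g <= x) /\
  (forall b, (forall x, E x -> b <= x) -> b <= g).

Definition pos_part (a : R) : R := Rmax a 0.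
Definition neg_part (a : R) : R := Rmin a 0.

Definition minmod (a b c : R) : R :=
  if Rlt_dec 0 a then
    (if Rlt_dec 0 b then (if Rlt_dec 0 c then Rmin a (Rmin b c) else 0) else 0)
  else if Rlt_dec a 0 then
    (if Rlt_dec b 0 then (if Rlt_dec c 0 then Rmax a (Rmax b c) else 0) else 0)
  else 0.

Definition theta : R := 2.

(* Cell values rho : nat -> R, cells i = 1..M; rho 0 and rho (M+1) are the
   values entering the slope computations at the boundary cells. *)
Definition slope (rho : nat -> R) (dx : R) (i : nat) : R :=
  minmod (theta * (rho (S i) - rho i) / dx)
         ((rho (S i) - rho (pred i)) / (2 * dx))
         (theta * (rho i - rho (pred i)) / dx).

Definition rhoE (rho : nat -> R) (dx : R) (i : nat) : R :=
  rho i + dx / 2 * slope rho dx i.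
Definition rhoW (rho : nat -> R) (dx : R) (i : nat) : R :=
  rho i - dx / 2 * slope rho dx i.

(* interface x_{i+1/2} = dx * i *)
Definition interface (dx : R) (i : nat) : R := dx * INR i.

(* numerical flux F_{i+1/2}, with no-flux boundary conditions F_{1/2} = F_{M+1/2} = 0 *)
Definition flux (psi u : R -> R) (M : nat) (dx : R) (rho : nat -> R) (i : nat) : R :=
  if Nat.eqb i 0 then 0 else if Nat.eqb i M then 0 else
  let ui := u (interface dx i) in
  rhoE rho dx i * psi (rhoW rho dx (S i)) * pos_part ui
  + rhoW rho dx (S i) * psi (rhoE rho dx i) * neg_part ui.

Definition step (psi u : R -> R) (M : nat) (dx dt : R) (rho : nat -> R) (i : nat) : R :=
  rho i - dt / dx * (flux psi u M dx rho i - flux psi u M dx rho (pred i)).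

Definition umax (u : R -> R) (M : nat) (dx : R) : R :=
  fold_right Rmax 0 (map (fun i => Rabs (u (interface dx i))) (seq 0 (S M))).

(* Main.v *)
Require Import Defs.
From Stdlib Require Import Reals Lra List Lia.
Open Scope R_scope.

Lemma minmod_prop a b c :
  (0 <= minmod a b c <= a /\ minmod a b c <= c) \/
  (a <= minmod a b c <= 0 /\ c <= minmod a b c) \/ minmod a b c = 0.
Proof.
  unfold minmod, Rmin, Rmax; repeat destruct Rlt_dec; repeat destruct Rle_dec;
  first [left; lra | right; left; lra | right; right; lra].
Qed.

Lemma EW_bounds (rho : nat -> R) dx j alpha : 0 < dx ->
  0 <= rho (pred j) <= alpha -> 0 <= rho j <= alpha -> 0 <= rho (S j) <= alpha ->
  (0 <= rhoE rho dx j <= alpha /\ 0 <= rhoW rho dx j <= alpha /\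
   rhoE rho dx j + rhoW rho dx j = 2 * rho j).
Proof.
  intros Hdx H1 H2 H3. unfold rhoE, rhoW, slope, theta.
  set (a := 2 * (rho (S j) - rho j) / dx).
  set (b := (rho (S j) - rho (pred j)) / (2 * dx)).
  set (c := 2 * (rho j - rho (pred j)) / dx).
  assert (Ha : dx / 2 * a = rho (S j) - rho j) by (unfold a; field; lra).
  assert (Hc : dx / 2 * c = rho j - rho (pred j)) by (unfold c; field; lra).
  assert (Mo : forall x y, x <= y -> dx / 2 * x <= dx / 2 * y)
    by (intros; apply Rmult_le_compat_l; lra).
  destruct (minmod_prop a b c) as [[[A B] C]|[[[A B] C]|A]].
  - pose proof (Mo _ _ A); pose proof (Mo _ _ B); pose proof (Mo _ _ C).
    replace (dx/2*0) with 0 in * by ring. lra.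
  - pose proof (Mo _ _ A); pose proof (Mo _ _ B); pose proof (Mo _ _ C).
    replace (dx/2*0) with 0 in * by ring. lra.
  - rewrite A. lra.
Qed.

Lemma le_fold_Rmax x l : In x l -> x <= fold_right Rmax 0 l.
Proof.
  induction l as [|y l IH]; simpl; [tauto|].
  intros [->|H]. apply Rmax_l. eapply Rle_trans; [apply IH; exact H| apply Rmax_r].
Qed.

Lemma fold_Rmax_ge0 l : 0 <= fold_right Rmax 0 l.
Proof. induction l; simpl. lra. eapply Rle_trans; [exact IHl| apply Rmax_r]. Qed.

Lemma umax_ge u M dx j : (j <= M)%nat -> Rabs (u (interface dx j)) <= umax u M dx.
Proof.
  intros Hj. unfold umax. apply le_fold_Rmax. apply (in_map (fun k => Rabs (u (interface dx k)))). apply in_seq. lia.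
Qed.

Lemma pos_part_b x U : Rabs x <= U -> 0 <= pos_part x <= U.
Proof. unfold pos_part, Rmax, Rabs; destruct Rle_dec; destruct Rcase_abs; lra. Qed.
Lemma neg_part_b x U : Rabs x <= U -> -U <= neg_part x <= 0.
Proof. unfold neg_part, Rmin, Rabs; destruct Rle_dec; destruct Rcase_abs; lra. Qed.

Lemma real_core rho E W alpha lam U p0 pE pW Pr Nr Pl Nl :
  rho = (E + W) / 2 -> 0 <= E -> 0 <= W -> 0 <= lam -> 0 <= U ->
  2 * lam * U * p0 <= 1 -> lam * U * alpha * (pE + pW) <= alpha - rho ->
  0 <= Pr <= E * p0 * U -> - (U * alpha * pE) <= Nr <= 0 ->
  0 <= Pl <= U * alpha * pW -> - (W * p0 * U) <= Nl <= 0 ->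
  0 <= rho - lam * ((Pr + Nr) - (Pl + Nl)) <= alpha.
Proof.
  intros. assert (forall x y, x <= y -> lam * x <= lam * y)
    by (intros; apply Rmult_le_compat_l; lra).
  rename H10 into Mo.
  assert (lam * Pr <= lam * (E * p0 * U)) by (apply Mo; lra).
  assert (lam * Nr >= lam * - (U * alpha * pE)) by (apply Rle_ge, Mo; lra).
  assert (lam * Pl <= lam * (U * alpha * pW)) by (apply Mo; lra).
  assert (lam * Nl >= lam * - (W * p0 * U)) by (apply Rle_ge, Mo; lra).
  assert (0 <= lam * Pr) by (apply Rmult_le_pos; lra).
  assert (lam * Nr <= 0) by (replace 0 with (lam*0) by ring; apply Mo; lra).
  assert (0 <= lam * Pl) by (apply Rmult_le_pos; lra).
  assert (lam * Nl <= 0) by (replace 0 with (lam*0) by ring; apply Mo; lra).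
  assert (E * (2 * lam * U * p0) <= E * 1) by (apply Rmult_le_compat_l; lra).
  assert (W * (2 * lam * U * p0) <= W * 1) by (apply Rmult_le_compat_l; lra).
  split; nra.
Qed.

Lemma mul3_le a b c a' b' c' : 0 <= a <= a' -> 0 <= b <= b' -> 0 <= c <= c' ->
  a * b * c <= a' * b' * c'.
Proof.
  intros. apply Rmult_le_compat; try lra. apply Rmult_le_pos; lra.
  apply Rmult_le_compat; lra.
Qed.

Theorem proposition2p4
  (psi : R -> R) (alpha : R) (u : R -> R) (L : R) (M : nat) (dt : R)
  (rho : nat -> R) (gamma : R) :
  is_saturation psi alpha ->
  0 < L -> (1 <= M)%nat -> 0 < dt ->
  is_inf (fun y => exists s, 0 < s < alpha /\ y = (alpha - s) / (alpha * psi s)) gamma ->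
  (forall i, (i <= S M)%nat -> 0 <= rho i <= alpha) ->
  dt * (2 * umax u M (L / INR M)) <= Rmin (1 / psi 0) gamma * (L / INR M) ->
  forall i, (1 <= i <= M)%nat ->
    0 <= step psi u M (L / INR M) dt rho i <= alpha.
Proof.
  intros [_ [Hmon [Ha [Hpa Hsgn]]]] HL HM Hdt [Hinf _] Hrho Hcfl i Hi.
  set (dx := L / INR M) in *.
  assert (Hdx : 0 < dx).
  { unfold dx. apply Rdiv_lt_0_compat; auto. apply lt_0_INR. lia. }
  set (U := umax u M dx) in *.
  assert (HU : 0 <= U) by apply fold_Rmax_ge0.
  set (G := Rmin (1 / psi 0) gamma) in *.
  assert (Hp0 : 0 < psi 0).
  { pose proof (Hsgn 0 (Rle_refl 0) ltac:(lra)). nra. }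
  assert (Hpsi : forall s, 0 <= s <= alpha -> 0 <= psi s <= psi 0).
  { intros s Hs. split. rewrite <- Hpa. apply Hmon; lra. apply Hmon; lra. }
  assert (HG : forall s, 0 <= s <= alpha -> alpha * psi s * G <= alpha - s).
  { intros s Hs.
    destruct (Req_dec s alpha) as [->|Hne]. rewrite Hpa. lra.
    destruct (Req_dec s 0) as [->|Hn0].
    - assert (G * psi 0 <= 1 / psi 0 * psi 0)
        by (apply Rmult_le_compat_r; [lra| apply Rmin_l]).
      replace (1 / psi 0 * psi 0) with 1 in H by (field; lra). nra.
    - assert (Hps : 0 < psi s) by (pose proof (Hsgn s ltac:(lra) Hne); nra).
      assert (G <= (alpha - s) / (alpha * psi s)).
      { eapply Rle_trans. apply Rmin_r. apply Hinf. exists s. split; [lra|reflexivity]. }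
      assert (G * (alpha * psi s) <= (alpha - s) / (alpha * psi s) * (alpha * psi s))
        by (apply Rmult_le_compat_r; [nra|lra]).
      replace ((alpha - s) / (alpha * psi s) * (alpha * psi s)) with (alpha - s) in H0
        by (field; nra). nra. }
  set (lam := dt / dx).
  assert (Hlam : 0 <= lam) by (unfold lam, Rdiv; apply Rmult_le_pos; [lra| left; apply Rinv_0_lt_compat; lra]).
  assert (HlG : 2 * lam * U <= G).
  { unfold lam. apply Rmult_le_reg_r with dx; auto.
    replace (2 * (dt / dx) * U * dx) with (dt * (2 * U)) by (field; lra). lra. }
  assert (HG0 : G * psi 0 <= 1).
  { assert (G * psi 0 <= 1 / psi 0 * psi 0)
        by (apply Rmult_le_compat_r; [lra| apply Rmin_l]).
    replace (1 / psi 0 * psi 0) with 1 in H by (field; lra). lra. }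
  destruct (EW_bounds rho dx i alpha Hdx (Hrho (pred i) ltac:(lia)) (Hrho i ltac:(lia))
    (Hrho (S i) ltac:(lia))) as [HE [HW HEW]].
  set (E := rhoE rho dx i) in *. set (W := rhoW rho dx i) in *.
  pose proof (Hpsi E HE) as HpE. pose proof (Hpsi W HW) as HpW.
  unfold step. fold lam.
  match goal with |- _ <= rho i - lam * (?a - ?b) <= _ =>
    assert (Hfr : a = (if Nat.eqb i M then 0 else rhoE rho dx i * psi (rhoW rho dx (S i)) * pos_part (u (interface dx i)))
     + (if Nat.eqb i M then 0 else rhoW rho dx (S i) * psi (rhoE rho dx i) * neg_part (u (interface dx i))));
    [|assert (Hfl : b = (if Nat.eqb (pred i) 0 then 0 else rhoE rho dx (pred i) * psi (rhoW rho dx (S (pred i))) * pos_part (u (interface dx (pred i))))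
     + (if Nat.eqb (pred i) 0 then 0 else rhoW rho dx (S (pred i)) * psi (rhoE rho dx (pred i)) * neg_part (u (interface dx (pred i)))))]
  end.
  { unfold flux. replace (Nat.eqb i 0) with false by (symmetry; apply Nat.eqb_neq; lia).
    destruct (Nat.eqb i M); cbv zeta; ring. }
  { unfold flux. destruct (Nat.eqb (pred i) 0); [ring|].
    replace (Nat.eqb (pred i) M) with false by (symmetry; apply Nat.eqb_neq; lia).
    cbv zeta; ring. }
  rewrite Hfr, Hfl. fold E W.
  assert (0 <= E * psi 0 * U) by (apply Rmult_le_pos; [apply Rmult_le_pos|]; lra).
  assert (0 <= W * psi 0 * U) by (apply Rmult_le_pos; [apply Rmult_le_pos|]; lra).
  assert (0 <= U * alpha * psi E) by (apply Rmult_le_pos; [apply Rmult_le_pos|]; lra).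
  assert (0 <= U * alpha * psi W) by (apply Rmult_le_pos; [apply Rmult_le_pos|]; lra).
  apply (real_core (rho i) E W alpha lam U (psi 0) (psi E) (psi W)
     (if Nat.eqb i M then 0 else rhoE rho dx i * psi (rhoW rho dx (S i)) * pos_part (u (interface dx i)))
     (if Nat.eqb i M then 0 else rhoW rho dx (S i) * psi (rhoE rho dx i) * neg_part (u (interface dx i)))
     (if Nat.eqb (pred i) 0 then 0 else rhoE rho dx (pred i) * psi (rhoW rho dx (S (pred i))) * pos_part (u (interface dx (pred i))))
     (if Nat.eqb (pred i) 0 then 0 else rhoW rho dx (S (pred i)) * psi (rhoE rho dx (pred i)) * neg_part (u (interface dx (pred i))))).
  - lra.
  - lra.
  - lra.
  - exact Hlam.
  - exact HU.
  - assert (2 * lam * U * psi 0 <= G * psi 0) by (apply Rmult_le_compat_r; lra). lra.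
  - pose proof (HG E HE). pose proof (HG W HW).
    assert (lam * U * alpha * (psi E + psi W) =
       (2 * lam * U) * (alpha * psi E) / 2 + (2 * lam * U) * (alpha * psi W) / 2) by field.
    assert ((2 * lam * U) * (alpha * psi E) <= G * (alpha * psi E))
      by (apply Rmult_le_compat_r; nra).
    assert ((2 * lam * U) * (alpha * psi W) <= G * (alpha * psi W))
      by (apply Rmult_le_compat_r; nra).
    nra.
  - destruct (Nat.eqb i M) eqn:Heq; [lra|].
    apply Nat.eqb_neq in Heq.
    pose proof (pos_part_b _ _ (umax_ge u M dx i ltac:(lia))).
    destruct (EW_bounds rho dx (S i) alpha Hdx (Hrho (pred (S i)) ltac:(lia)) (Hrho (S i) ltac:(lia))
    (Hrho (S (S i)) ltac:(lia))) as [_ [HW1 _]].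
    change (rhoE rho dx i) with E; change (rhoW rho dx i) with W; repeat match goal with H : context [umax u M dx] |- _ => change (umax u M dx) with U in H end; repeat match goal with H : context [rhoW rho dx i] |- _ => change (rhoW rho dx i) with W in H end; repeat match goal with H : context [rhoE rho dx i] |- _ => change (rhoE rho dx i) with E in H end.
    pose proof (Hpsi _ HW1).
    split. apply Rmult_le_pos; [apply Rmult_le_pos|]; lra.
    apply mul3_le; fold E; lra.
  - destruct (Nat.eqb i M) eqn:Heq; [lra|].
    apply Nat.eqb_neq in Heq.
    pose proof (neg_part_b _ _ (umax_ge u M dx i ltac:(lia))).
    destruct (EW_bounds rho dx (S i) alpha Hdx (Hrho (pred (S i)) ltac:(lia)) (Hrho (S i) ltac:(lia))
    (Hrho (S (S i)) ltac:(lia))) as [_ [HW1 _]].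
    change (rhoE rho dx i) with E; change (rhoW rho dx i) with W; repeat match goal with H : context [umax u M dx] |- _ => change (umax u M dx) with U in H end; repeat match goal with H : context [rhoW rho dx i] |- _ => change (rhoW rho dx i) with W in H end; repeat match goal with H : context [rhoE rho dx i] |- _ => change (rhoE rho dx i) with E in H end.
    fold E.
    set (w := rhoW rho dx (S i)) in *. set (n := neg_part (u (interface dx i))) in *.
    assert (w * psi E * (-n) <= alpha * psi E * U) by (apply mul3_le; lra).
    assert (0 <= w * psi E * (-n)) by (apply Rmult_le_pos; [apply Rmult_le_pos|]; lra).
    split; nra.
  - destruct (Nat.eqb (pred i) 0) eqn:Heq; [lra|].
    apply Nat.eqb_neq in Heq.
    replace (S (pred i)) with i by lia. fold W.
    pose proof (pos_part_b _ _ (umax_ge u M dx (pred i) ltac:(lia))).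
    destruct (EW_bounds rho dx (pred i) alpha Hdx (Hrho (pred (pred i)) ltac:(lia)) (Hrho (pred i) ltac:(lia))
    (Hrho (S (pred i)) ltac:(lia))) as [HE1 _].
    change (rhoE rho dx i) with E; change (rhoW rho dx i) with W; repeat match goal with H : context [umax u M dx] |- _ => change (umax u M dx) with U in H end; repeat match goal with H : context [rhoW rho dx i] |- _ => change (rhoW rho dx i) with W in H end; repeat match goal with H : context [rhoE rho dx i] |- _ => change (rhoE rho dx i) with E in H end.
    split. apply Rmult_le_pos; [apply Rmult_le_pos|]; lra.
    set (e := rhoE rho dx (pred i)) in *. set (p := pos_part (u (interface dx (pred i)))) in *.
    assert (e * psi W * p <= alpha * psi W * U) by (apply mul3_le; lra). nra.
  - destruct (Nat.eqb (pred i) 0) eqn:Heq; [lra|].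
    apply Nat.eqb_neq in Heq.
    replace (S (pred i)) with i by lia. fold W.
    pose proof (neg_part_b _ _ (umax_ge u M dx (pred i) ltac:(lia))).
    destruct (EW_bounds rho dx (pred i) alpha Hdx (Hrho (pred (pred i)) ltac:(lia)) (Hrho (pred i) ltac:(lia))
    (Hrho (S (pred i)) ltac:(lia))) as [HE1 _].
    change (rhoE rho dx i) with E; change (rhoW rho dx i) with W; repeat match goal with H : context [umax u M dx] |- _ => change (umax u M dx) with U in H end; repeat match goal with H : context [rhoW rho dx i] |- _ => change (rhoW rho dx i) with W in H end; repeat match goal with H : context [rhoE rho dx i] |- _ => change (rhoE rho dx i) with E in H end.
    set (e := rhoE rho dx (pred i)) in *. set (n := neg_part (u (interface dx (pred i)))) in *.
    pose proof (Hpsi e HE1).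
    assert (W * psi e * (-n) <= W * psi 0 * U) by (apply mul3_le; lra).
    assert (0 <= W * psi e * (-n)) by (apply Rmult_le_pos; [apply Rmult_le_pos|]; lra).
    split; nra.
Qed.
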